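(* Let $m\ge 2$ and $r\ge 1$ be integers, and for each $i\in\{1,\dots,r\}$ let $s_i\in\{1,\dots,m-1\}$ be an integer. Let $\widetilde{R}=\mathbb{Q}[x_{i,j}\mid 0\le i\le r,\ 1\le j\le m]$ be the polynomial ring in $(r+1)m$ variables. For each $i\in\{1,\dots,r\}$, writing $s=s_i$, consider the $m$ elements $$x_{i,s}+x_{i,s+1}-x_{i-1,s}-x_{i-1,s+1},\qquad x_{i,s}x_{i,s+1}-x_{i-1,s}x_{i-1,s+1},\qquad x_{i,j}-x_{i-1,j}\ \ (1\le j\le m,\ j\neq s,s+1).$$ Then the sequence of $rm$ elements of $\widetilde{R}$ obtained by listing these elements for $i=1$, then for $i=2$, and so on up to $i=r$, is a regular sequence in $\widetilde{R}$.
   Context: A sequence $f_1,\dots,f_n$ in a commutative ring $A$ is regular if for each $k$ the element $f_k$ is not a zero divisor in $A/(f_1,\dots,f_{k-1})$ and $A/(f_1,\dots,f_n)\neq 0$. (In the paper these elements arise from a resolution $D$ of a closed braid diagram on $m$ strands with $r$ wide edges, the $i$-th wide edge being in position $s_i$; the variables $x_{i,j}$ label the arcs between consecutive wide edges.) *)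

(* Defs.v *)
From HB Require Import structures.
From mathcomp Require Import all_boot all_order all_algebra.
From mathcomp Require Import mpoly.
Set Implicit Arguments. Unset Strict Implicit. Unset Printing Implicit Defensive.
Import GRing.Theory.
Local Open Scope ring_scope.

Definition in_ideal (R : comRingType) (fs : seq R) (x : R) : Prop :=
  exists c : seq R, size c = size fs /\
    x = \sum_(i < size fs) c`_i * fs`_i.

Definition regular_seq (R : comRingType) (fs : seq R) : Prop :=
  (forall k : nat, (k < size fs)%N -> forall g : R,
      in_ideal (take k fs) (fs`_k * g) -> in_ideal (take k fs) g)
  /\ ~ in_ideal fs 1.

(* The variable with (0-based) index k of {mpoly rat[n]}, or 0 if k >= n. *)
Definition varX (n k : nat) : {mpoly rat[n]} :=
  match @insub nat (fun k => k < n)%N 'I_n k with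
  | Some o => 'X_o
  | None => 0
  end.

(* x_{i,j}, 0 <= i <= r, 1 <= j <= m, in Q[x_{i,j}] with (r+1)m variables,
   encoded as variable number i*m + (j-1). *)
Definition xv (r m i j : nat) : {mpoly rat[r.+1 * m]} :=
  varX (r.+1 * m) (i * m + (j - 1)).

Definition block (r m : nat) (s : nat -> nat) (i : nat) : seq {mpoly rat[r.+1 * m]} :=
  let si := s i in
  [:: xv r m i si + xv r m i si.+1 - xv r m i.-1 si - xv r m i.-1 si.+1;
      xv r m i si * xv r m i si.+1 - xv r m i.-1 si * xv r m i.-1 si.+1]
  ++ [seq xv r m i j - xv r m i.-1 j | j <- iota 1 m & (j != si) && (j != si.+1)].

Definition the_sequence (r m : nat) (s : nat -> nat) : seq {mpoly rat[r.+1 * m]} :=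
  flatten [seq block r m s i | i <- iota 1 r].

(* Main.v *)
From HB Require Import structures.
From mathcomp Require Import all_boot all_order all_algebra.
From mathcomp Require Import mpoly.
From mathcomp Require Import zify ring.
Require Import Defs.
Set Implicit Arguments. Unset Strict Implicit. Unset Printing Implicit Defensive.
Import GRing.Theory.
Local Open Scope ring_scope.

Section Gen.
Variable n : nat.
Local Notation R := {mpoly rat[n]}.

Lemma ring_ind (P : R -> Prop) :
  (forall c, P c%:MP) -> (forall i, P 'X_i) ->
  (forall p q, P p -> P q -> P (p + q)) ->
  (forall p q, P p -> P q -> P (p * q)) -> forall p, P p.
Proof.
move=> hC hX hD hM p; elim/mpolyind: p => [|c m p _ _ hp].
  by have := hC 0; rewrite mpolyC0.
apply: (hD) => //; rewrite -mul_mpolyC; apply: (hM) => //.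
rewrite mpolyXE_id; apply: (big_ind P) => //.
  by have := hC 1; rewrite mpolyC1.
move=> i _; have hX1 : forall k, P ('X_i ^+ k).
  elim=> [|k ih]; first by rewrite expr0; have := hC 1; rewrite mpolyC1.
  by rewrite exprS; apply: (hM).
exact: hX1.
Qed.

Definition subst (z : nat) (a : R) (p : R) : R :=
  comp_mpoly [tuple (if (i : nat) == z then a else 'X_i) | i < n] p.

Lemma substX z a (i : 'I_n) : subst z a 'X_i = if (i : nat) == z then a else 'X_i.
Proof. by rewrite /subst comp_mpolyXU -tnth_nth tnth_mktuple. Qed.
Lemma substC z a c : subst z a c%:MP = c%:MP.
Proof. by rewrite /subst comp_mpolyC. Qed.
Lemma substD z a p q : subst z a (p + q) = subst z a p + subst z a q.
Proof. by rewrite /subst rmorphD. Qed.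
Lemma substM z a p q : subst z a (p * q) = subst z a p * subst z a q.
Proof. by rewrite /subst rmorphM. Qed.
Lemma substN z a p : subst z a (- p) = - subst z a p.
Proof. by rewrite /subst rmorphN. Qed.
Lemma subst0 z a : subst z a 0 = 0.
Proof. by rewrite /subst rmorph0. Qed.
Lemma subst1 z a : subst z a 1 = 1.
Proof. by rewrite /subst rmorph1. Qed.

Lemma varX_lt k (hk : (k < n)%N) : varX n k = 'X_(Ordinal hk).
Proof. by rewrite /varX insubT. Qed.
Lemma varX_ge k : (n <= k)%N -> varX n k = 0.
Proof. by move=> hk; rewrite /varX insubF // ltnNge hk. Qed.

Lemma subst_varX z a k : subst z a (varX n k) =
  if (k < n)%N then (if k == z then a else varX n k) else 0.
Proof.
case: ltnP => hk; first by rewrite [in LHS](varX_lt hk) substX /= (varX_lt hk).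
by rewrite varX_ge // subst0.
Qed.

Lemma subst_subst z a b p : subst z b (subst z a p) = subst z (subst z b a) p.
Proof.
elim/ring_ind: p => [c|i|p q hp hq|p q hp hq].
- by rewrite !substC.
- rewrite [subst z a _]substX [RHS]substX; case: eqP => // hi; by rewrite substX (introF eqP hi).
- by rewrite !substD hp hq.
- by rewrite !substM hp hq.
Qed.

Lemma subst_comm w z a p : w != z ->
  subst w 0 (subst z a p) = subst z (subst w 0 a) (subst w 0 p).
Proof.
move=> hwz; have hzw : z != w by rewrite eq_sym.
elim/ring_ind: p => [c|i|p q hp hq|p q hp hq].
- by rewrite !substC.
- rewrite [subst z a _]substX [subst w 0 'X_i]substX.
  case: (eqVneq (i : nat) z) => hiz.
    by rewrite hiz (negbTE hzw) substX hiz eqxx.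
  case: (eqVneq (i : nat) w) => hiw.
    by rewrite substX hiw eqxx subst0.
  by rewrite !substX (negbTE hiw) (negbTE hiz).
- by rewrite !substD hp hq.
- by rewrite !substM hp hq.
Qed.

Definition free z p := subst z 0 p = p.

Lemma free_all z a p : free z p -> subst z a p = p.
Proof. by move=> h; rewrite -h subst_subst subst0. Qed.

Lemma free_subst w z a p : free w a -> free w p -> free w (subst z a p).
Proof.
move=> ha hp; rewrite /free; case: (eqVneq w z) => [ewz|hwz].
  by rewrite -ewz subst_subst ha.
by rewrite subst_comm // ha hp.
Qed.

Lemma freeD z p q : free z p -> free z q -> free z (p + q).
Proof. by rewrite /free substD => -> ->. Qed.
Lemma freeM z p q : free z p -> free z q -> free z (p * q).
Proof. by rewrite /free substM => -> ->. Qed.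
Lemma freeN z p : free z p -> free z (- p).
Proof. by rewrite /free substN => ->. Qed.
Lemma freeB z p q : free z p -> free z q -> free z (p - q).
Proof. by move=> hp hq; apply: freeD => //; apply: freeN. Qed.
Lemma free0 z : free z 0. Proof. exact: subst0. Qed.
Lemma free_varX z k : k != z -> free z (varX n k).
Proof. by move=> h; rewrite /free subst_varX (negbTE h); case: ltnP => // hk; rewrite varX_ge. Qed.
Lemma freeC z c : free z c%:MP. Proof. exact: substC. Qed.
Lemma subst_varX_self z a : (z < n)%N -> subst z a (varX n z) = a.
Proof. by move=> hz; rewrite subst_varX hz eqxx. Qed.

Lemma subst_div z a (hz : (z < n)%N) p : exists d, p - subst z a p == (varX n z - a) * d.
Proof.
elim/ring_ind: p => [c|i|p q [d1 /eqP h1] [d2 /eqP h2]|p q [d1 /eqP h1] [d2 /eqP h2]].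
- by exists 0; rewrite substC subrr mulr0.
- rewrite substX; case: eqP => hi.
    by exists 1; rewrite mulr1 (varX_lt hz); apply/eqP; congr (_ - _); congr 'X__; apply: val_inj.
  by exists 0; rewrite subrr mulr0.
- exists (d1 + d2); rewrite substD mulrDr -h1 -h2; apply/eqP.
  by rewrite opprD addrACA.
- exists (d1 * q + subst z a p * d2); apply/eqP.
  rewrite substM mulrDr mulrA -h1 mulrCA -h2.
  by rewrite mulrBl mulrBr addrA subrK.
Qed.


Implicit Types (L B P : seq R) (x y g : R).

Lemma inI_lin L x : in_ideal L x <-> exists c : nat -> R, x = \sum_(i < size L) c i * L`_i.
Proof.
split; first by case=> cs [_ ->]; exists (nth 0 cs).
case=> c ->; exists (mkseq c (size L)); split; first by rewrite size_mkseq.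
by apply: eq_bigr => i _; rewrite nth_mkseq.
Qed.

Lemma inI0 L : in_ideal L 0.
Proof. by apply/inI_lin; exists (fun _ => 0); rewrite big1 // => i _; rewrite mul0r. Qed.

Lemma inID L x y : in_ideal L x -> in_ideal L y -> in_ideal L (x + y).
Proof.
move=> /inI_lin [c1 ->] /inI_lin [c2 ->]; apply/inI_lin; exists (fun i => c1 i + c2 i).
by rewrite -big_split; apply: eq_bigr => i _; rewrite mulrDl.
Qed.

Lemma inIM L x y : in_ideal L x -> in_ideal L (y * x).
Proof.
move=> /inI_lin [c ->]; apply/inI_lin; exists (fun i => y * c i).
by rewrite mulr_sumr; apply: eq_bigr => i _; rewrite mulrA.
Qed.

Lemma inIN L x : in_ideal L x -> in_ideal L (- x).
Proof. by move=> h; rewrite -mulN1r; apply: inIM. Qed.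

Lemma inIB L x y : in_ideal L x -> in_ideal L y -> in_ideal L (x - y).
Proof. by move=> hx hy; apply: inID => //; apply: inIN. Qed.

Lemma inI_nth L i : (i < size L)%N -> in_ideal L L`_i.
Proof.
move=> hi; apply/inI_lin; exists (fun j => (j == i)%:R).
rewrite (bigD1 (Ordinal hi)) //= eqxx mul1r big1 ?addr0 // => j hj.
have -> : (nat_of_ord j == i) = false.
  by apply/negbTE; apply: contra hj => /eqP e; apply/eqP/val_inj.
by rewrite mul0r.
Qed.

Lemma inI_mem L y : y \in L -> in_ideal L y.
Proof. by move=> hy; rewrite -(nth_index 0 hy); apply: inI_nth; rewrite index_mem. Qed.

Lemma inI_trans L L' x : (forall y, y \in L -> in_ideal L' y) -> in_ideal L x -> in_ideal L' x.
Proof.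
move=> h /inI_lin [c ->]; apply: (big_ind (in_ideal L')).
- exact: inI0.
- exact: inID.
- by move=> i _; apply: inIM; apply: h; apply: mem_nth.
Qed.

Definition morph (f : R -> R) :=
  [/\ {morph f : x y / x + y}, {morph f : x y / x * y}, f 0 = 0 & {morph f : x / - x}].

Lemma inI_morph f L x : morph f -> in_ideal L x -> in_ideal (map f L) (f x).
Proof.
case=> fD fM f0 fN /inI_lin [c ->]; apply/inI_lin; exists (fun i => f (c i)).
rewrite (big_morph f fD f0) size_map; apply: eq_bigr => i _.
by rewrite fM (nth_map 0).
Qed.

Lemma morph_subst z a : morph (subst z a).
Proof. split; [exact: substD | exact: substM | exact: subst0 | exact: substN]. Qed.

Lemma morph_comp f h : morph f -> morph h -> morph (f \o h).
Proof.
case=> fD fM f0 fN [hD hM h0 hN]; split => /=.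
- by move=> x y /=; rewrite hD fD.
- by move=> x y /=; rewrite hM fM.
- by rewrite /= h0 f0.
- by move=> x /=; rewrite hN fN.
Qed.

Lemma morph_id : morph id. Proof. by split. Qed.

Definition nzd B f := forall g, in_ideal B (f * g) -> in_ideal B g.

Definition reg_rel B P := forall k, (k < size P)%N -> forall g,
  in_ideal (B ++ take k P) (P`_k * g) -> in_ideal (B ++ take k P) g.

Lemma reg_rel_nil B : reg_rel B [::].
Proof. by []. Qed.

Lemma reg_rel_cons B f P : nzd B f -> reg_rel (rcons B f) P -> reg_rel B (f :: P).
Proof.
move=> hf hP [|k] hk g /=; first by rewrite cats0; apply: hf.
by rewrite -cat_rcons; apply: hP.
Qed.

Lemma nzd_mul B f h : nzd B f -> nzd B h -> nzd B (f * h).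
Proof. by move=> hf hh g; rewrite -mulrA => /hf /hh. Qed.

Lemma nzd_opp B f : nzd B f -> nzd B (- f).
Proof. by move=> hf g; rewrite mulNr -mulrN => /hf /inIN; rewrite opprK. Qed.

Lemma nzd_lin B z c : (z < n)%N -> free z c -> (forall b, b \in B -> free z b) ->
  nzd B (varX n z + c).
Proof.
move=> hz hc hB g /inI_lin [cs hs].
have hf0 : varX n z + c != 0.
  apply/eqP => f0; have := congr1 (subst z (1 - c)) f0.
  rewrite subst0 substD subst_varX_self // (free_all _ hc) subrK.
  by move/eqP; rewrite oner_eq0.
have hsf : subst z (- c) (varX n z + c) = 0.
  by rewrite substD subst_varX_self // (free_all _ hc) addNr.
have h0 : \sum_(i < size B) subst z (- c) (cs i) * B`_i = 0.
  have e := congr1 (subst z (- c)) hs.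
  rewrite substM hsf mul0r (big_morph (subst z (- c)) (@substD z (- c)) (@subst0 z (- c))) in e.
  rewrite [RHS]e; apply: eq_bigr => i _.
  by rewrite substM (free_all _ (hB _ (mem_nth 0 (ltn_ord i)))).
have hd : forall i, exists d, cs i - subst z (- c) (cs i) == (varX n z + c) * d.
  move=> i; have [d hd] := subst_div (- c) hz (cs i); exists d.
  by rewrite -[c in varX n z + c]opprK.
pose d i := xchoose (hd i).
have hdi i : cs i - subst z (- c) (cs i) = (varX n z + c) * d i.
  by apply/eqP; exact: (xchooseP (hd i)).
have : (varX n z + c) * g = (varX n z + c) * \sum_(i < size B) d i * B`_i.
  rewrite hs -[LHS]subr0; rewrite -{}[X in _ - X = _]h0 -sumrB mulr_sumr.
  apply: eq_bigr => i _.
  by rewrite -mulrBl hdi mulrA.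
move/(mulfI hf0) => ->; apply/inI_lin; by exists d.
Qed.

Lemma elim_lin B P z c : (z < n)%N -> free z c -> (forall b, b \in B -> free z b) ->
  reg_rel B (map (subst z (- c)) P) -> reg_rel (rcons B (varX n z + c)) P.
Proof.
move=> hz hc hB hreg k hk g hg.
have hsf : subst z (- c) (varX n z + c) = 0 by rewrite substD subst_varX_self // (free_all _ hc) addNr.
have hdiv : forall h, in_ideal (rcons B (varX n z + c) ++ take k P) (h - (subst z (- c)) h).
  move=> h; have [d /eqP ->] := subst_div (- c) hz h.
  rewrite opprK mulrC; apply: inIM; apply: inI_mem.
  by rewrite mem_cat mem_rcons mem_head.
have h1 := inI_morph (morph_subst z (- c)) hg.
have h2 : in_ideal (B ++ take k (map (subst z (- c)) P)) ((map (subst z (- c)) P)`_k * (subst z (- c)) g).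
  move: h1; rewrite substM -(nth_map 0 0 (subst z (- c)) hk); apply: inI_trans => y.
  rewrite map_cat map_rcons -map_take mem_cat mem_rcons inE => /orP [/orP [/eqP ->|]|].
  - by rewrite hsf; apply: inI0.
  - case/mapP => b hb ->; rewrite (free_all _ (hB _ hb)); apply: inI_mem.
    by rewrite mem_cat hb.
  - by move=> hy; apply: inI_mem; rewrite mem_cat hy orbT.
have hk2 : (k < size (map (subst z (- c)) P))%N by rewrite size_map.
have h3 := hreg k hk2 _ h2.
have h4 : in_ideal (rcons B (varX n z + c) ++ take k P) ((subst z (- c)) g).
  move: h3; apply: inI_trans => y; rewrite mem_cat => /orP [hy|].
    by apply: inI_mem; rewrite mem_cat mem_rcons inE hy orbT.
  rewrite -map_take => /mapP [p hp ->].
  rewrite -[(subst z (- c)) p](subrKC p) -opprB; apply: inID; last by apply: inIN; apply: hdiv.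
  by apply: inI_mem; rewrite mem_cat hp orbT.
by rewrite -(subrK ((subst z (- c)) g) g); apply: inID.
Qed.

Definition freeAbove T p := forall k, (T <= k)%N -> free k p.

Lemma freeAbove_mono T T' p : (T <= T')%N -> freeAbove T p -> freeAbove T' p.
Proof. by move=> hT h k hk; apply: h; apply: leq_trans hk. Qed.

Lemma freeAbove_varX T k : (k < T)%N -> freeAbove T (varX n k).
Proof.
move=> hk k' hk'; apply: free_varX; apply/eqP => e; move: hk; rewrite e ltnNge hk'.
by [].
Qed.

Lemma freeAbove_subst T z a p : freeAbove T a -> freeAbove T p -> freeAbove T (subst z a p).
Proof. by move=> ha hp k hk; apply: free_subst; [apply: ha | apply: hp]. Qed.

Lemma freeAboveD T p q : freeAbove T p -> freeAbove T q -> freeAbove T (p + q).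
Proof. by move=> hp hq k hk; apply: freeD; [apply: hp | apply: hq]. Qed.
Lemma freeAboveM T p q : freeAbove T p -> freeAbove T q -> freeAbove T (p * q).
Proof. by move=> hp hq k hk; apply: freeM; [apply: hp | apply: hq]. Qed.
Lemma freeAboveN T p : freeAbove T p -> freeAbove T (- p).
Proof. by move=> hp k hk; apply: freeN; apply: hp. Qed.
Lemma freeAboveB T p q : freeAbove T p -> freeAbove T q -> freeAbove T (p - q).
Proof. by move=> hp hq; apply: freeAboveD => //; apply: freeAboveN. Qed.

Definition Inv (th : R -> R) T :=
  [/\ morph th, forall k, (T <= k)%N -> th (varX n k) = varX n k &
      forall k, (k < T)%N -> freeAbove T (th (varX n k))].

Lemma Inv_id T : Inv id T.
Proof. by split; [exact: morph_id | by [] | move=> k hk; exact: freeAbove_varX]. Qed.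

Lemma Inv_mono th T T' : Inv th T -> (T <= T')%N -> Inv th T'.
Proof.
case=> hm hfix hfr hT; split => // [k hk|k hk].
  by apply: hfix; apply: leq_trans hk.
case: (ltnP k T) => hkT; first by apply: freeAbove_mono (hfr _ hkT).
by rewrite hfix //; apply: freeAbove_varX.
Qed.

Lemma Inv_subst th T z a : Inv th T -> (z < T)%N -> freeAbove T a ->
  Inv (subst z a \o th) T.
Proof.
case=> hm hfix hfr hz ha; split.
- exact: morph_comp (morph_subst z a) hm.
- move=> k hk /=; rewrite hfix // free_all //; apply: free_varX.
  by apply/eqP => e; move: hz; rewrite -e ltnNge hk.
- by move=> k hk /=; apply: freeAbove_subst => //; apply: hfr.
Qed.

Lemma lin_block (zf wf : nat -> nat) (T0 T : nat) (J : seq nat) :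
  forall th B Post,
  Inv th T -> (T0 <= T)%N ->
  (forall j, j \in J -> [&& T0 <= zf j, zf j < T & zf j < n]%N) ->
  uniq (map zf J) ->
  (forall j, j \in J -> th (varX n (zf j)) = varX n (zf j)) ->
  (forall j, j \in J -> freeAbove T0 (th (varX n (wf j)))) ->
  (forall b, b \in B -> forall j, j \in J -> free (zf j) b) ->
  (forall th', Inv th' T -> reg_rel B (map th' Post)) ->
  reg_rel B (map th ([seq varX n (zf j) - varX n (wf j) | j <- J] ++ Post)).
Proof.
elim: J => [|j J IH] th B Post hI hT0 hJ hu hfix hw hB hPost /=; first exact: hPost.
have hjJ : j \in j :: J by rewrite mem_head.
case/and3P: (hJ j hjJ) => h1 h2 h3.
case: (hI) => [[thD thM th0 thN] _ _].
rewrite thD thN (hfix j hjJ).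
set p := th (varX n (wf j)).
have hpz : free (zf j) (- p) by apply: freeN; apply: (hw j hjJ).
apply: reg_rel_cons.
  by apply: nzd_lin => // b hb; apply: hB.
apply: elim_lin => //; first by move=> b hb; apply: hB.
rewrite opprK -map_comp.
move: hu => /= /andP [hnot hu].
apply: IH => //.
- apply: Inv_subst => //; apply: freeAbove_mono hT0 _; exact: hw.
- by move=> j' hj'; apply: hJ; rewrite inE hj' orbT.
- move=> j' hj' /=; rewrite hfix ?inE ?hj' ?orbT // free_all //; apply: free_varX.
  by apply: contraNneq hnot => <-; apply: map_f.
- move=> j' hj' /=; apply: freeAbove_subst; first by apply: hw.
  by apply: hw; rewrite inE hj' orbT.
- by move=> b hb j' hj'; apply: hB; rewrite // inE hj' orbT.
Qed.
End Gen.

Section Main.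
Variables (m r : nat) (s : nat -> nat).
Hypothesis hm : (2 <= m)%N.
Hypothesis hs : forall i : nat, (1 <= i <= r)%N -> (1 <= s i <= m - 1)%N.
Local Notation n := (r.+1 * m)%N.

Lemma outer cnt : forall i th (B : seq {mpoly rat[n]}), (1 <= i)%N -> (i + cnt = r.+1)%N ->
  Inv th (i * m) -> (forall b, b \in B -> freeAbove (i * m) b) ->
  reg_rel B (map th (flatten [seq block r m s i' | i' <- iota i cnt])).
Proof.
elim: cnt => [|cnt IH] i th B hi hic hI hB; first exact: reg_rel_nil.
case: i hi hic hI hB => [//|i] _ hic hI hB.
have hir : (i.+1 <= r)%N by lia.
have /andP [hs1 hs2] : (1 <= s i.+1 <= m - 1)%N by apply: hs; lia.
set si := s i.+1 in hs1 hs2 *.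
have hnm : (i.+2 * m <= n)%N by rewrite leq_mul2r ltnS hir orbT.
have em1 : (i.+2 * m = m + i.+1 * m)%N by rewrite mulSn.
have em0 : (i.+1 * m = m + i * m)%N by rewrite mulSn.
case: (hI) => [[thD thM th0 thN] hfix hfr].
set zs := (i.+1 * m + (si - 1))%N.
set y := (i.+1 * m + si)%N.
set ps := th (varX n (i * m + (si - 1))).
set ps1 := th (varX n (i * m + si)).
have hps : freeAbove (i.+1 * m) ps by apply: hfr; lia.
have hps1 : freeAbove (i.+1 * m) ps1 by apply: hfr; lia.
have hzs : (zs < n)%N by lia.
have hy : (y < n)%N by lia.
set c := varX n y - ps - ps1.
have hcz : free zs c.
  apply: freeB; last by apply: hps1; lia.
  apply: freeB; last by apply: hps; lia.
  apply: free_varX; apply/eqP; lia.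
have hBz : forall b, b \in B -> free zs b by move=> b hb; apply: hB => //; lia.
rewrite /= /block /=.
have e1 : th (xv r m i.+1 si + xv r m i.+1 si.+1 - xv r m i si - xv r m i si.+1)
   = varX n zs + c.
  rewrite /xv subSS subn0 !thD !thN (hfix zs); last lia.
  rewrite (hfix y); last lia.
  by rewrite /c !addrA.
rewrite e1; apply: reg_rel_cons; first exact: nzd_lin.
apply: elim_lin => //=.
rewrite -map_comp.
set q := subst zs (- c) (th (xv r m i.+1 si * xv r m i.+1 si.+1 - xv r m i si * xv r m i si.+1)).
have eq : q = - ((varX n y + - ps) * (varX n y + - ps1)).
  rewrite /q /xv subSS subn0 thD thN !thM (hfix zs); last lia.
  rewrite (hfix y); last lia.
  rewrite substD substN !substM subst_varX_self //.
  rewrite -/ps -/ps1 -/y.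
  rewrite (free_all _ (free_varX _ _)); last by apply/eqP; lia.
  rewrite (free_all _ (hps _ _)); last by lia.
  rewrite (free_all _ (hps1 _ _)); last by lia.
  by rewrite /c; ring.
have hpy : free y (- ps) by apply: freeN; apply: hps; lia.
have hpy1 : free y (- ps1) by apply: freeN; apply: hps1; lia.
have hBy : forall b, b \in B -> free y b by move=> b hb; apply: hB => //; lia.
apply: reg_rel_cons.
  by rewrite eq; apply: nzd_opp; apply: nzd_mul; apply: nzd_lin.
have hfq : freeAbove (i.+2 * m) q.
  have hyl : (y < i.+2 * m)%N by lia.
  have hle : (i.+1 * m <= i.+2 * m)%N by lia.
  rewrite eq; apply: freeAboveN; apply: freeAboveM; apply: freeAboveD;
    try exact: (freeAbove_varX _ hyl); apply: freeAboveN; exact: freeAbove_mono hle _.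
apply: (@lin_block _ (fun j => i.+1 * m + (j - 1))%N (fun j => i * m + (j - 1))%N
          (i.+1 * m) (i.+2 * m) [seq j <- iota 1 m | (j != si) && (j != si.+1)]).
- apply: Inv_subst; first by apply: Inv_mono hI _; lia.
    by lia.
  rewrite /c; apply: freeAboveN; apply: freeAboveB; first apply: freeAboveB.
  + by apply: freeAbove_varX; lia.
  + by apply: freeAbove_mono hps; lia.
  + by apply: freeAbove_mono hps1; lia.
- by lia.
- move=> j; rewrite mem_filter mem_iota => /andP [_ /andP [hj1 hj2]].
  apply/and3P; split; lia.
- rewrite map_inj_in_uniq ?filter_uniq ?iota_uniq //.
  move=> a b; rewrite !mem_filter !mem_iota => /andP [_ /andP [ha1 ha2]] /andP [_ /andP [hb1 hb2]].
  lia.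
- move=> j; rewrite mem_filter mem_iota => /andP [/andP [hjs hjs1] /andP [hj1 hj2]] /=.
  rewrite hfix; last by lia.
  rewrite free_all //; apply: free_varX; apply/eqP => e.
  by move/eqP: hjs; apply; rewrite /zs in e; lia.
- move=> j; rewrite mem_filter mem_iota => /andP [_ /andP [hj1 hj2]] /=.
  have hf := hfr (i * m + (j - 1))%N (ltac:(lia)).
  by rewrite free_all //; apply: hf; lia.
- move=> b; rewrite mem_rcons inE => /orP [/eqP ->|hb] j;
    rewrite mem_filter mem_iota => /andP [/andP [hjs hjs1] /andP [hj1 hj2]].
    rewrite eq; apply: freeN; apply: freeM; apply: freeD.
    + apply: free_varX; apply/eqP => e; move/eqP: hjs1; apply; rewrite /y in e; lia.
    + by apply: freeN; apply: hps; lia.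
    + apply: free_varX; apply/eqP => e; move/eqP: hjs1; apply; rewrite /y in e; lia.
    + by apply: freeN; apply: hps1; lia.
  by apply: hB => //; lia.
- move=> th' hI'; apply: IH => //; first by lia.
  move=> b; rewrite mem_rcons inE => /orP [/eqP ->|hb] //.
  by apply: freeAbove_mono (hB _ hb); lia.
Qed.

End Main.

Lemma mevX0 (n k : nat) : meval (fun _ : 'I_n => (0 : rat)) (varX n k) = 0.
Proof. by case: (ltnP k n) => hk; [rewrite varX_lt mevalXU | rewrite varX_ge // meval0]. Qed.

Lemma ev0 (m r : nat) (s : nat -> nat) x : x \in the_sequence r m s ->
  meval (fun _ => 0) x = 0.
Proof.
case/flattenP => bl /mapP [i _ ->]; rewrite /block mem_cat !inE.
case/orP => [/orP [/eqP -> | /eqP ->] | /mapP [j _ ->]]; rewrite /xv.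
- rewrite !mevalB mevalD !mevX0; ring.
- rewrite !mevalB !mevalM !mevX0; ring.
- rewrite !mevalB !mevX0; ring.
Qed.

Theorem mainTheorem1 (m r : nat) (s : nat -> nat)
  (hm : (2 <= m)%N) (hr : (1 <= r)%N)
  (hs : forall i : nat, (1 <= i <= r)%N -> (1 <= s i <= m - 1)%N) :
  regular_seq (the_sequence r m s).
Proof.
split.
- have H : reg_rel [::] (map id (the_sequence r m s)).
    apply: outer => //.
    exact: Inv_id.
  by rewrite map_id in H; exact: H.
- move/inI_lin => [c hc]; have := congr1 (meval (fun _ => 0)) hc.
  rewrite meval1 (big_morph _ (mevalD _) (meval0 _)) big1 => [/eqP|i _].
    by rewrite oner_eq0.
  by rewrite mevalM (@ev0 m r s _ (mem_nth 0 (ltn_ord i))) mulr0.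
Qed.
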